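(* Let $\epsilon>0$, $\gamma>0$ and $k\ge 2$. For $B=(B^1,\dots,B^k)\in\mathbb R^k$ and $a\in[-1,1]$ define $$F_B(a)=\sum_{\substack{i,j\in\{1,\dots,k\}\\ i\neq j}}\exp\Bigl(-\frac{\epsilon\,|B^i-B^j+\gamma a|}{2\gamma}\Bigr).$$ Then $$\sup_{B\in\mathbb R^k,\ a,a'\in[-1,1]}\frac{F_B(a)}{F_B(a')}=e^{\epsilon/2},$$ with the supremum attained when $B^1=\dots=B^k$, $a=0$ and $a'\in\{-1,1\}$. Hence, defining $\epsilon_2=\ln\sup_{B,a,a'}F_B(a)/F_B(a')$, one has $\epsilon_2=\epsilon/2$, and the expected privacy loss against adversary II, $\frac1k\cdot 0+\frac{k-1}{k}\,\epsilon_2$, equals $\frac{k-1}{k}\cdot\frac{\epsilon}{2}$.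
   Context: Setting: a client holds a private value $a\in[-1,1]$ (a clipped average gradient coordinate) and, given a model weight $B^{\mathrm{pre}}$, returns $B^{\mathrm{pre}}-\gamma a+L$ where $L$ is Laplace noise with mean $0$ and scale $2\gamma/\epsilon$ (density proportional to $\exp(-\epsilon|x|/(2\gamma))$); this alone gives $\epsilon$-differential privacy. The server holds $k$ model instances; the instance sent to the client (the pre-image) is uniformly random and the returned model overwrites a uniformly random instance. Adversary II sees the $k$ instances $B^1,\dots,B^k$ right after the update but not which instance was the pre-image nor which was the returned one. With probability $1/k$ the returned model overwrote its own pre-image, in which case the privacy loss is taken to be $0$; with probability $(k-1)/k$ both the pre-image and the returned model are among the $k$ observed instances, each ordered pair (returned $=B^i$, pre-image $=B^j$), $i\ne j$, being equally likely, so that the likelihood of the observation given $a$ is proportional to $F_B(a)$, and the privacy loss in this case is $\epsilon_2$. The expected privacy loss is the average of these two losses weighted by their probabilities. *)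

(* Defs.v *)
From Stdlib Require Import Reals Lra.
Open Scope R_scope.

Fixpoint rsum (n : nat) (f : nat -> R) : R :=
  match n with
  | O => 0
  | S m => rsum m f + f m
  end.

Definition F (eps gamma : R) (k : nat) (B : nat -> R) (a : R) : R :=
  rsum k (fun i => rsum k (fun j =>
    if Nat.eqb i j then 0
    else exp (- (eps * Rabs (B i - B j + gamma * a)) / (2 * gamma)))).

Definition ratio_set (eps gamma : R) (k : nat) : R -> Prop :=
  fun r => exists (B : nat -> R) (a a' : R),
    -1 <= a <= 1 /\ -1 <= a' <= 1 /\ r = F eps gamma k B a / F eps gamma k B a'.

Definition expected_loss (k : nat) (eps2 : R) : R :=
  / INR k * 0 + (INR k - 1) / INR k * eps2.

(* Main.v *)
Require Import Defs.
From Stdlib Require Import Reals Lra Lia.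
Open Scope R_scope.

Lemma expl : forall x y, x <= y -> exp x <= exp y.
Proof. intros x y H. destruct (Req_dec x y) as [->|]; [lra|]. left; apply exp_increasing; lra. Qed.

Lemma core_pos (D x y t : R) : 0 <= D -> 0 <= x <= t -> 0 <= y <= t ->
  exp (- (D + x)) + exp (- Rabs (D - x)) <=
  exp t * (exp (- (D + y)) + exp (- Rabs (D - y))).
Proof.
  intros HD Hx Hy.
  assert (HL : exp (- (D + x)) + exp (- Rabs (D - x)) <= exp (-D) + exp (-D + x)
            /\ exp (- (D + x)) + exp (- Rabs (D - x)) <= exp (-D) + 1).
  { rewrite <- exp_0. split; apply Rplus_le_compat; apply expl.
    all: try lra.
    all: unfold Rabs; destruct (Rcase_abs (D - x)); lra. }
  rewrite Rmult_plus_distr_l, <- !exp_plus.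
  destruct (Rle_dec y D).
  - rewrite (Rabs_pos_eq (D - y)) by lra.
    destruct HL as [HL _]. eapply Rle_trans; [apply HL|].
    apply Rplus_le_compat; apply expl; lra.
  - rewrite (Rabs_left (D - y)) by lra.
    destruct HL as [_ HL]. eapply Rle_trans; [apply HL|].
    apply Rplus_le_compat; [apply expl; lra|].
    rewrite <- exp_0. apply expl; lra.
Qed.

Lemma sym_abs (D x : R) : exp (- Rabs (D + x)) + exp (- Rabs (D - x)) =
  exp (- (Rabs D + Rabs x)) + exp (- Rabs (Rabs D - Rabs x)).
Proof.
  unfold Rabs at 3 4.
  destruct (Rcase_abs D); destruct (Rcase_abs x).
  all: unfold Rabs; repeat match goal with |- context [Rcase_abs ?e] => destruct (Rcase_abs e) end.
  all: first [ apply f_equal2; apply f_equal; lra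
             | rewrite Rplus_comm; apply f_equal2; apply f_equal; lra | lra ].
Qed.

Lemma core (D x y t : R) : Rabs x <= t -> Rabs y <= t ->
  exp (- Rabs (D + x)) + exp (- Rabs (D - x)) <=
  exp t * (exp (- Rabs (D + y)) + exp (- Rabs (D - y))).
Proof.
  intros Hx Hy. rewrite !sym_abs.
  apply core_pos; try split; try apply Rabs_pos; lra.
Qed.

Lemma rsum_ext n f g : (forall i, (i < n)%nat -> f i = g i) -> rsum n f = rsum n g.
Proof. induction n; simpl; intros H; [reflexivity|]. rewrite IHn by (intros; apply H; lia). rewrite H by lia. reflexivity. Qed.

Lemma rsum_plus n f g : rsum n (fun i => f i + g i) = rsum n f + rsum n g.
Proof. induction n; simpl; [lra|]. rewrite IHn; lra. Qed.

Lemma rsum_scal n c f : rsum n (fun i => c * f i) = c * rsum n f.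
Proof. induction n; simpl; [lra|]. rewrite IHn; lra. Qed.

Lemma rsum_le n f g : (forall i, (i < n)%nat -> f i <= g i) -> rsum n f <= rsum n g.
Proof. induction n; simpl; intros H; [lra|]. apply Rplus_le_compat; [apply IHn; intros; apply H; lia| apply H; lia]. Qed.

Lemma rsum_swap n m f : rsum n (fun i => rsum m (fun j => f i j)) = rsum m (fun j => rsum n (fun i => f i j)).
Proof. induction n; simpl.
  - induction m; simpl; lra.
  - rewrite IHn. rewrite <- rsum_plus. reflexivity. Qed.

Lemma rsum_ge_term n f m : (forall i, (i < n)%nat -> 0 <= f i) -> (m < n)%nat -> f m <= rsum n f.
Proof.
  induction n; intros H Hm; [lia|]. simpl.
  assert (H0 : 0 <= rsum n f).
  { clear IHn Hm. induction n; simpl; [lra|].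
    assert (0 <= f n) by (apply H; lia).
    assert (0 <= rsum n f) by (apply IHn; intros; apply H; lia). lra. }
  destruct (Nat.eq_dec m n) as [->|].
  - lra.
  - assert (f m <= rsum n f) by (apply IHn; [intros; apply H; lia| lia]).
    assert (0 <= f n) by (apply H; lia). lra.
Qed.

Section M.
Variables (eps gamma : R).
Hypothesis He : 0 < eps.
Hypothesis Hg : 0 < gamma.

Lemma termform z : exp (- (eps * Rabs z) / (2 * gamma)) = exp (- Rabs (eps / (2*gamma) * z)).
Proof.
  f_equal. rewrite Rabs_mult, (Rabs_pos_eq (eps/(2*gamma))).
  - field. lra.
  - apply Rlt_le, Rdiv_lt_0_compat; lra.
Qed.

Definition T (B : nat -> R) (a : R) (i j : nat) : R :=
  if Nat.eqb i j then 0
  else exp (- (eps * Rabs (B i - B j + gamma * a)) / (2 * gamma)).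

Lemma T_nonneg B a i j : 0 <= T B a i j.
Proof. unfold T. destruct (Nat.eqb i j); [lra| apply Rlt_le, exp_pos]. Qed.

Lemma pair_bound B a a' i j : -1 <= a <= 1 -> -1 <= a' <= 1 ->
  T B a i j + T B a j i <= exp (eps/2) * (T B a' i j + T B a' j i).
Proof.
  intros Ha Ha'. unfold T. rewrite (Nat.eqb_sym j i).
  destruct (Nat.eqb i j). { rewrite Rplus_0_r, Rmult_0_r. lra. }
  rewrite !termform.
  set (D := eps / (2*gamma) * (B i - B j)).
  replace (eps / (2 * gamma) * (B i - B j + gamma * a)) with (D + eps/2*a) by (unfold D; field; lra).
  replace (eps / (2 * gamma) * (B j - B i + gamma * a)) with (- (D - eps/2*a)) by (unfold D; field; lra).
  replace (eps / (2 * gamma) * (B i - B j + gamma * a')) with (D + eps/2*a') by (unfold D; field; lra).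
  replace (eps / (2 * gamma) * (B j - B i + gamma * a')) with (- (D - eps/2*a')) by (unfold D; field; lra).
  rewrite !Rabs_Ropp. apply core.
  - rewrite Rabs_mult, Rabs_pos_eq by lra. unfold Rabs; destruct (Rcase_abs a); nra.
  - rewrite Rabs_mult, Rabs_pos_eq by lra. unfold Rabs; destruct (Rcase_abs a'); nra.
Qed.

Lemma F_T k B a : F eps gamma k B a = rsum k (fun i => rsum k (fun j => T B a i j)).
Proof. reflexivity. Qed.

Lemma F_pos k B a : (2 <= k)%nat -> 0 < F eps gamma k B a.
Proof.
  intros Hk. rewrite F_T.
  apply Rlt_le_trans with (T B a 0 1).
  { unfold T. simpl. apply exp_pos. }
  apply Rle_trans with (rsum k (fun j => T B a 0 j)).
  - apply (rsum_ge_term k (fun j => T B a 0 j)); [intros; apply T_nonneg| lia].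
  - apply (rsum_ge_term k (fun i => rsum k (fun j => T B a i j))); [|lia].
    intros. assert (0 <= rsum k (fun j => T B a i j)) by
      (apply Rle_trans with (T B a i 0); [apply T_nonneg| apply (rsum_ge_term k (fun j => T B a i j)); [intros; apply T_nonneg| lia]]).
    lra.
Qed.

Lemma F_bound k B a a' : -1 <= a <= 1 -> -1 <= a' <= 1 ->
  F eps gamma k B a <= exp (eps/2) * F eps gamma k B a'.
Proof.
  intros Ha Ha'.
  assert (Hs : forall c, 2 * F eps gamma k B c = rsum k (fun i => rsum k (fun j => T B c i j + T B c j i))).
  { intros c. rewrite F_T.
    transitivity (rsum k (fun i => rsum k (fun j => T B c i j)) + rsum k (fun j => rsum k (fun i => T B c i j))).
    - rewrite <- rsum_swap. lra.
    - rewrite <- rsum_plus. apply rsum_ext; intros. rewrite <- rsum_plus. reflexivity. }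
  assert (2 * F eps gamma k B a <= exp (eps/2) * (2 * F eps gamma k B a')).
  { rewrite !Hs. rewrite <- rsum_scal. apply rsum_le. intros.
    rewrite <- rsum_scal. apply rsum_le. intros. apply pair_bound; auto. }
  lra.
Qed.

Lemma F_const k B a : (forall i j, B i = B j) ->
  F eps gamma k B a = exp (- (eps * Rabs (gamma * a)) / (2 * gamma)) *
     rsum k (fun i => rsum k (fun j => if Nat.eqb i j then 0 else 1)).
Proof.
  intros HB. unfold F. rewrite <- rsum_scal. apply rsum_ext; intros.
  rewrite <- rsum_scal. apply rsum_ext; intros.
  destruct (Nat.eqb i i0); [lra|]. rewrite (HB i i0). replace (B i0 - B i0 + gamma * a) with (gamma * a) by ring. ring.
Qed.

End M.

Theorem lemma1 (eps gamma : R) (k : nat) :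
  0 < eps -> 0 < gamma -> (2 <= k)%nat ->
  is_lub (ratio_set eps gamma k) (exp (eps / 2)) /\
  (forall (B : nat -> R) (a' : R), (forall i j, B i = B j) ->
     (a' = -1 \/ a' = 1) ->
     F eps gamma k B 0 / F eps gamma k B a' = exp (eps / 2)) /\
  (forall s : R, is_lub (ratio_set eps gamma k) s ->
     ln s = eps / 2 /\
     expected_loss k (ln s) = (INR k - 1) / INR k * (eps / 2)).
Proof.
  intros He Hg Hk.
  assert (Hatt : forall (B : nat -> R) (a' : R), (forall i j, B i = B j) ->
     (a' = -1 \/ a' = 1) ->
     F eps gamma k B 0 / F eps gamma k B a' = exp (eps / 2)).
  { intros B a' HB Ha'.
    assert (HN : 0 < F eps gamma k B 0) by (apply F_pos; auto).
    rewrite (F_const eps gamma k B 0 HB) in HN |- *.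
    rewrite (F_const eps gamma k B a' HB).
    set (N := rsum k _) in *.
    assert (HN' : 0 < N).
    { replace (gamma * 0) with 0 in HN by ring. rewrite Rabs_R0 in HN.
      replace (- (eps * 0) / (2 * gamma)) with 0 in HN by (field; lra). rewrite exp_0 in HN. lra. }
    clear HN.
    replace (gamma * 0) with 0 by ring. rewrite Rabs_R0.
    replace (- (eps * 0) / (2 * gamma)) with 0 by (field; lra). rewrite exp_0.
    replace (- (eps * Rabs (gamma * a')) / (2 * gamma)) with (- (eps/2)).
    2:{ rewrite Rabs_mult, (Rabs_pos_eq gamma) by lra.
        assert (Rabs a' = 1) as ->.
        { destruct Ha' as [-> | ->]; unfold Rabs; destruct (Rcase_abs _); lra. }
        field; lra. }
    rewrite exp_Ropp. field. repeat split; try lra; apply Rgt_not_eq, exp_pos. }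
  assert (Hlub : is_lub (ratio_set eps gamma k) (exp (eps / 2))).
  { split.
    - intros r [B [a [a' [Ha [Ha' ->]]]]].
      assert (0 < F eps gamma k B a') by (apply F_pos; auto).
      apply (Rmult_le_reg_r (F eps gamma k B a')); auto.
      unfold Rdiv. rewrite Rmult_assoc, Rinv_l by lra. rewrite Rmult_1_r.
      apply F_bound; auto.
    - intros b Hb. apply Hb. exists (fun _ => 0), 0, 1.
      split; [lra|]. split; [lra|]. symmetry. apply Hatt; auto. }
  split; [exact Hlub|]. split; [exact Hatt|].
  intros s Hs. rewrite (is_lub_u _ _ _ Hs Hlub), ln_exp. split; [reflexivity|].
  unfold expected_loss. ring.
Qed.
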